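(* Let $A$ be an $n\times n$ Dickson matrix over $\mathbb{F}_{q^n}$ and, for $1\le k\le n$, let $A_{k-1}=A[\{0,1,\dots,k-1\}|\{0,1,\dots,k-1\}]$. Then $\mathrm{rank}\,A=\max\{k\in\{1,\dots,n\}:\det A_{k-1}\neq 0\}$ (with the value $0$ if no such $k$ exists).
   Context: Rows and columns are indexed by $\mathbb{Z}_n$. A Dickson matrix is the matrix $A$ with $A[i|j]=a_{j-i}^{q^i}$ (indices mod $n$) associated to a $q$-polynomial $\sum_{j=0}^{n-1}a_jx^{q^j}\in\mathbb{F}_{q^n}[x]$. $A[\alpha|\beta]$ denotes the submatrix with rows $\alpha$ and columns $\beta$. *)

(* Defs.v *)
From mathcomp Require Import all_boot all_order all_algebra all_field.
Set Implicit Arguments. Unset Strict Implicit. Unset Printing Implicit Defensive.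
Import GRing.Theory.
Local Open Scope ring_scope.

Lemma ord_pos_n (n : nat) (i : 'I_n) : (0 < n)%N.
Proof. by apply: leq_ltn_trans (ltn_ord i). Qed.

Definition subZn (n : nat) (j i : 'I_n) : 'I_n :=
  Ordinal (ltn_pmod (j + n - i) (ord_pos_n i)).

(* Dickson matrix of the q-polynomial sum_{j<n} a_j x^(q^j):
   A[i|j] = a_{j-i}^(q^i), indices mod n. *)
Definition dickson_mx (L : nzRingType) (q n : nat) (a : 'I_n -> L) : 'M[L]_n :=
  \matrix_(i < n, j < n) (a (subZn j i)) ^+ (q ^ i).

Lemma ord_leq_n (n : nat) (k : 'I_n.+1) : (k <= n)%N.
Proof. exact: ltn_ord k. Qed.

Definition lead_submx (R : Type) (n : nat) (A : 'M[R]_n) (k : 'I_n.+1) : 'M[R]_k :=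
  \matrix_(i < k, j < k) A (widen_ord (ord_leq_n k) i) (widen_ord (ord_leq_n k) j).

Definition prime_power (q : nat) : Prop :=
  exists p e : nat, prime p /\ (0 < e)%N /\ q = (p ^ e)%N.

(* Main.v *)
Require Import Defs.
From mathcomp Require Import all_boot all_order all_algebra all_field.
From mathcomp Require Import zify.
From mathcomp Require Import fingroup perm.
Set Implicit Arguments. Unset Strict Implicit. Unset Printing Implicit Defensive.
Import GRing.Theory.
Local Open Scope ring_scope.

Section Gen.
Variables (F : fieldType) (n : nat) (sg : F -> F).
Hypotheses (sgD : forall x y, sg (x + y) = sg x + sg y)
  (sgM : forall x y, sg (x * y) = sg x * sg y) (sg0 : sg 0 = 0).
Variable M : 'M[F]_n.
Hypothesis H : forall i j, M (ordS i) (ordS j) = sg (M i j).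

Lemma map_mulmx m p r (X : 'M[F]_(m, p)) (Y : 'M[F]_(p, r)) :
  map_mx sg (X *m Y) = map_mx sg X *m map_mx sg Y.
Proof.
apply/matrixP=> i j; rewrite !mxE (big_morph sg sgD sg0).
by apply: eq_bigr => l _; rewrite sgM !mxE.
Qed.

Lemma map_submx_sg m1 m2 (X : 'M[F]_(m1, n)) (Y : 'M[F]_(m2, n)) :
  (X <= Y)%MS -> (map_mx sg X <= map_mx sg Y)%MS.
Proof. by case/submxP=> Z ->; rewrite map_mulmx submxMl. Qed.

Definition U k : 'M[F]_n := pid_mx k *m M.

Lemma row_U k i : row i (U k) = if (i < k)%N then row i M else 0.
Proof.
apply/rowP=> j; rewrite !mxE (bigD1 i) //= big1 => [|l nli].
  rewrite !mxE eqxx /=; case: ifP => _; rewrite ?mxE ?mul1r ?mul0r addr0 //.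
rewrite !mxE (_ : (i == l :> nat) = false) ?mul0r //.
by apply/negbTE; rewrite eq_sym; exact: nli.
Qed.

Lemma rank_U k : (\rank (U k) <= k)%N.
Proof.
apply: leq_trans (mxrankM_maxl _ _) _.
case: (leqP k n) => hk; first by rewrite rank_pid_mx.
by apply: leq_trans (rank_leq_row _) (ltnW hk).
Qed.

Definition s : {perm 'I_n} := perm (@ord_pred_inj n).

Definition tau m (X : 'M[F]_(m, n)) := col_perm s (map_mx sg X).

Lemma tau_sub m1 m2 (X : 'M[F]_(m1, n)) (Y : 'M[F]_(m2, n)) :
  (X <= Y)%MS -> (tau X <= tau Y)%MS.
Proof. by move=> /map_submx_sg XY; rewrite /tau !col_permE submxMr. Qed.

Lemma row_S i : row (ordS i) M = tau (row i M).
Proof.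
apply/rowP=> j; by rewrite !mxE permE -{1}(ord_predK j) H.
Qed.

Lemma row_tau m (X : 'M[F]_(m, n)) i : row i (tau X) = tau (row i X).
Proof. by apply/rowP=> j; rewrite !mxE. Qed.

Lemma tau0 m : tau (0 : 'M[F]_(m, n)) = 0.
Proof. by apply/matrixP=> i j; rewrite !mxE sg0. Qed.

Lemma stuck (k : 'I_n) : (row k M <= U k)%MS -> (M <= U k)%MS.
Proof.
move=> hk.
have tauU : (tau (U k) <= U k)%MS.
  apply/row_subP=> i; rewrite row_tau row_U.
  case: ifP => ik; last by rewrite tau0 sub0mx.
  have iS : ordS i = (i.+1)%N :> nat.
    by rewrite /= modn_small // (leq_ltn_trans ik (ltn_ord k)).
  rewrite -row_S.
  have [lt|ge] := ltnP (ordS i) k.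
    by rewrite -[row _ M](_ : row (ordS i) (U k) = _) ?row_sub // row_U lt.
  have -> : ordS i = k by apply: val_inj; apply/eqP; rewrite eqn_leq ge andbT; move: ik; rewrite -iS.
  exact: hk.
have all : forall d (m : 'I_n), m = (k + d)%N :> nat -> (row m M <= U k)%MS.
  elim=> [|d IH] m hm.
    by have -> : m = k by apply: val_inj => /=; rewrite hm addn0.
  have hmn := ltn_ord m; rewrite hm addnS in hmn.
  have hm' : (k + d < n)%N by apply: ltnW.
  have -> : m = ordS (Ordinal hm').
    by apply: val_inj => /=; rewrite hm addnS modn_small.
  rewrite row_S; apply: submx_trans tauU; apply: tau_sub; exact: IH.
apply/row_subP=> m; have [lt|ge] := ltnP m k.
  by rewrite -[row _ M](_ : row m (U k) = _) ?row_sub // row_U lt.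
by apply: (all (m - k)%N); rewrite subnKC.
Qed.

Lemma row_U_sub k (i : 'I_n) : (i < k)%N -> (row i M <= U k)%MS.
Proof. by move=> lt; rewrite -[row _ M](_ : row i (U k) = _) ?row_sub // row_U lt. Qed.

Lemma rank_U_full : \rank (U (\rank M)) = \rank M.
Proof.
have rn : (\rank M <= n)%N := rank_leq_row M.
suff : forall j, (j <= \rank M)%N -> \rank (U j) = j by apply.
elim=> [|j IH] hj.
  by apply/eqP; rewrite -leqn0 rank_U.
have jn : (j < n)%N := leq_trans hj rn.
pose kj := Ordinal jn.
have nst : ~~ (row kj M <= U j)%MS.
  apply/negP=> /stuck /mxrankS; rewrite leqNgt.
  by apply/negP/negPn; apply: leq_ltn_trans (rank_U _) _.
have sub : (U j <= U j.+1)%MS.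
  apply/row_subP=> i; rewrite row_U; case: ifP => ij; last by rewrite sub0mx.
  by apply: row_U_sub; rewrite ltnS ltnW.
have nsub : ~~ (U j.+1 <= U j)%MS.
  apply: contra nst => h; apply: submx_trans h; exact: row_U_sub.
have lt := mxrank_leqif_sup sub; rewrite -(ltn_leqif lt) in nsub.
apply/eqP; rewrite eqn_leq rank_U /=; move: nsub; rewrite IH ?(ltnW hj) //.
Qed.

Lemma M_sub_U : (M <= U (\rank M))%MS.
Proof.
have sub : (U (\rank M) <= M)%MS by rewrite submxMl.
have := mxrank_leqif_sup sub; rewrite rank_U_full => /leqif_refl.
by [].
Qed.

End Gen.

Lemma pidR (R : nzRingType) m n k (hk : (k <= n)%N) (C : 'M[R]_(m,n)) i j :
  (C *m (pid_mx k : 'M_(n,k))) i j = C i (widen_ord hk j).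
Proof.
rewrite mxE (bigD1 (widen_ord hk j)) //= big1 => [|l nl].
  rewrite !mxE /= eqxx; have -> : (j < k)%N := ltn_ord j; by rewrite mulr1 addr0.
rewrite !mxE (_ : (l == j :> nat) = false) ?mulr0 //.
by apply/negbTE; exact: nl.
Qed.

Lemma pidL (R : nzRingType) p n k (hk : (k <= n)%N) (B : 'M[R]_(n,p)) i j :
  ((pid_mx k : 'M_(k,n)) *m B) i j = B (widen_ord hk i) j.
Proof.
rewrite mxE (bigD1 (widen_ord hk i)) //= big1 => [|l nl].
  rewrite !mxE /= eqxx; have -> : (i < k)%N := ltn_ord i; by rewrite mul1r addr0.
rewrite !mxE (_ : (i == l :> nat) = false) ?mul0r //.
by apply/negbTE; rewrite eq_sym; exact: nl.
Qed.

Lemma lead_eq (R : nzRingType) n (M : 'M[R]_n) (k : 'I_n.+1) :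
  lead_submx M k = (pid_mx k : 'M_(k,n)) *m M *m (pid_mx k : 'M_(n,k)).
Proof.
apply/matrixP=> i j; rewrite (pidR (ord_leq_n k)) (pidL (ord_leq_n k)) mxE.
by congr (M _ _); apply: val_inj.
Qed.

Lemma lead_rank (F : fieldType) n (M : 'M[F]_n) (k : 'I_n.+1) :
  (\rank (lead_submx M k) <= \rank M)%N.
Proof.
rewrite lead_eq; apply: leq_trans (mxrankM_maxl _ _) _; exact: mxrankM_maxr.
Qed.

Lemma minor_nz (F : fieldType) n (sg : F -> F)
  (sgD : forall x y, sg (x + y) = sg x + sg y)
  (sgM : forall x y, sg (x * y) = sg x * sg y) (sg0 : sg 0 = 0)
  (M : 'M[F]_n) (H : forall i j, M (ordS i) (ordS j) = sg (M i j))
  (k : 'I_n.+1) : k = \rank M :> nat -> \det (lead_submx M k) != 0.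
Proof.
move=> hk.
have [X hX] := submxP (M_sub_U sgD sgM sg0 H).
have HT : forall i j, M^T (ordS i) (ordS j) = sg (M^T i j) by move=> i j; rewrite !mxE.
have hc := rank_U_full sgD sgM sg0 HT.
rewrite mxrank_tr /U -[pid_mx _ *m M^T]trmxK trmx_mul trmxK tr_pid_mx mxrank_tr in hc.
rewrite /U -hk in hX; rewrite -hk in hc.
have kn : (k <= n)%N := ltn_ord k.
have pp : (pid_mx k : 'M[F]_n) = (pid_mx k : 'M_(n,k)) *m (pid_mx k : 'M_(k,n)).
  by rewrite mul_pid_mx !minnn.
have e : M *m pid_mx k = (X *m pid_mx k) *m lead_submx M k *m (pid_mx k : 'M_(k,n)).
  by rewrite lead_eq {1}hX pp !mulmxA.
have rk : \rank (lead_submx M k) = k.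
  apply/eqP; rewrite eqn_leq rank_leq_row /=.
  rewrite -{1}hc e; apply: leq_trans (mxrankM_maxl _ _) _; exact: mxrankM_maxr.
have : lead_submx M k \in unitmx by rewrite -row_free_unit /row_free rk.
by rewrite unitmxE unitfE.
Qed.

Lemma rank_max (F : fieldType) n (sg : F -> F)
  (sgD : forall x y, sg (x + y) = sg x + sg y)
  (sgM : forall x y, sg (x * y) = sg x * sg y) (sg0 : sg 0 = 0)
  (M : 'M[F]_n) (H : forall i j, M (ordS i) (ordS j) = sg (M i j)) :
  \rank M = (\max_(k : 'I_n.+1 | (0 < k)%N && (\det (lead_submx M k) != 0%R)) (k : nat))%N.
Proof.
apply/eqP; rewrite eqn_leq; apply/andP; split; last first.
  apply/bigmax_leqP=> k /andP[_ dk].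
  have : lead_submx M k \in unitmx by rewrite unitmxE unitfE.
  rewrite -row_free_unit /row_free => /eqP <-; exact: lead_rank.
have [->|rp] := posnP (\rank M); first by [].
have rn : (\rank M < n.+1)%N by rewrite ltnS rank_leq_row.
pose k := Ordinal rn.
have -> : \rank M = k by [].
apply: (@leq_bigmax_cond _ _ (fun k : 'I_n.+1 => nat_of_ord k) k).
by apply/andP; split => //; exact: (minor_nz sgD sgM sg0 H).
Qed.

Lemma subZn_S n (i j : 'I_n) : subZn (ordS j) (ordS i) = subZn j i.
Proof.
apply: val_inj => /=.
have jn := ltn_ord j; have iN := ltn_ord i.
case: (ltnP j.+1 n) => hj; [rewrite (modn_small hj) | have ej : j.+1 = n by lia];
  (case: (ltnP i.+1 n) => hi; [rewrite (modn_small hi) | have ei : i.+1 = n by lia]).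
- by rewrite addSn subSS.
- rewrite ei modnn subn0.
  have -> : (j + n - i = j.+1 + n - n)%N by lia.
  by rewrite addnK modnDr.
- rewrite ej modnn add0n.
  have -> : (j + n - i = (n - i.+1) + n)%N by lia.
  by rewrite modnDr.
- rewrite ej ei modnn add0n subn0 modnn.
  have -> : (j + n - i = n)%N by lia.
  by rewrite modnn.
Qed.

Theorem mainTheorem7 (L : finFieldType) (q n : nat)
  (hq : prime_power q) (hn : (0 < n)%N) (hL : #|L| = (q ^ n)%N)
  (a : 'I_n -> L) :
  let A := dickson_mx q a in
  \rank A = (\max_(k : 'I_n.+1 | (0 < k)%N && (\det (lead_submx A k) != 0%R)) (k : nat))%N.
Proof.
move=> A.
case: hq => p [e [pp [e0 qe]]].
have chp : p \in [pchar L].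
  apply: (@card_finPcharP _ p (e * n)) => //; by rewrite hL qe expnM.
have q0 : (0 < q)%N by rewrite qe expn_gt0 prime_gt0.
pose sg := fun x : L => x ^+ q.
apply: (@rank_max _ _ sg).
- move=> x y; rewrite /sg exprDn_pchar // qe pnatX pnatE // chp //.
- by move=> x y; rewrite /sg exprMn.
- by rewrite /sg expr0n eqn0Ngt q0.
move=> i j; rewrite /A /sg !mxE subZn_S -exprM.
case: (ltnP i.+1 n) => hi.
  by rewrite /= (modn_small hi) expnS mulnC.
have ei : i.+1 = n by have := ltn_ord i; lia.
rewrite /= ei modnn expn0 expr1 -expnSr ei -hL expf_card //.
Qed.
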